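(* Let $R$ be a regular run and let $0\le\alpha<\beta$ be reals with $\alpha+d_{open}<\beta-\Delta_{close}$. If TrackStatus$(x)\neq$ incrossing over the open interval $(\alpha,\beta)$ for every track $x$, then GateStatus = opened over $[\alpha+d_{open},\,\beta-\Delta_{close}]$.
   Context: Setting (evolving algebra for the railroad crossing). States are structures over a vocabulary containing: a finite universe Tracks; the reals and ExtendedReals $=\mathbb{R}\cup\{\infty\}$ with standard $<$ and $+$ ($\infty$ largest); a nullary real-valued symbol $\mathrm{CT}$ (current time); positive real constants $d_{close},d_{open},d_{min},d_{max}$ with $d_{close}<d_{min}\le d_{max}$; a unary function TrackStatus from Tracks to $\{\text{empty},\text{coming},\text{incrossing}\}$; a unary function Deadline from Tracks to ExtendedReals; a nullary Dir with values in $\{\text{open},\text{close}\}$; a nullary GateStatus with values in $\{\text{opened},\text{closed}\}$. Put $W=d_{min}-d_{close}$ and $\Delta_{close}=d_{close}+(d_{max}-d_{min})=d_{max}-W$. For a track $x$, $s(x)$ is the condition [$\mathrm{TrackStatus}(x)=\text{empty}$ or $\mathrm{CT}+d_{open}<\mathrm{Deadline}(x)$], and SafeToOpen is $\forall x\in\mathrm{Tracks}\ s(x)$. The program has two modules (agents). Gate: simultaneously OpenGate ''if Dir=open then GateStatus:=opened'' and CloseGate ''if Dir=close then GateStatus:=closed''. Controller: simultaneously, for every track $x$, SetDeadline$(x)$ ''if TrackStatus$(x)$=coming and Deadline$(x)=\infty$ then Deadline$(x):=\mathrm{CT}+W$'', SignalClose$(x)$ ''if $\mathrm{CT}=$Deadline$(x)$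 then Dir:=close'', ClearDeadline$(x)$ ''if TrackStatus$(x)$=empty and Deadline$(x)<\infty$ then Deadline$(x):=\infty$'', together with SignalOpen ''if Dir=close and SafeToOpen then Dir:=open''. Executing a module means computing all updates it generates in the current state and performing them simultaneously (nothing happens if the update set is inconsistent). A module is enabled at a state if its update set is consistent and contains an update that changes the state. TrackStatus is external (changed only by the environment); Deadline, Dir, GateStatus are internal (changed only by the modules); other symbols are static. Runs: for $t\mapsto R(t)$, $t\in[0,\infty)$, let $\rho(t)$ be the reduct of $R(t)$ without CT. $R$ is a pre-run if all $R(t)$ share a superuniverse, $\mathrm{CT}=t$ in $R(t)$, and for every $\tau>0$ there are $0=t_0<\dots<t_n=\tau$ with $\rho$ constant on each $(t_i,t_{i+1})$. For a term $e$ (free variables fixed), $e_t$ is its value in $R(t)$, $e_{t+}$ (resp. $e_{t-}$, $t>0$) its constant value on some $(t,t+\epsilon)$ (resp. $(t-\epsilon,t)$); likewise $\rho(t\pm)$. $e$ holds over an interval if it holds at each point; $e$ becomes (is set to) $a$ at $t$ if $e_{t-}\ne a=e_t$ or $e_t\neq a=e_{t+}$. A pre-run is a run if (i) whenever $\rho(t+)\neq\rho(t)$, $\rho(t+)$ is the CT-free reduct of the result of executing some modules at $R(t)$ (these agents fire at $t$), with external functions equal in $\rho(t)$ and $\rho(t+)$; (ii) whenever $t>0$ and $\rho(t)\ne\rho(t-)$, they differ only in external functions. An agent is immediate if it fires at every moment it is enabled; bounded if immediate or there is $b>0$ with no interval $(t,t+b)$ over which it is enabled but never fires. Initial states: TrackStatus$(x)$=empty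 and Deadline$(x)=\infty$ for every track $x$. A regular run is a run $R$ with $R(0)$ initial such that: (Train Motion) for each track $x$ there is a finite or infinite sequence $0=t_0<t_1<t_2<\cdots$ (the significant moments of $x$) with TrackStatus$(x)$=empty over each $[t_{3i},t_{3i+1})$, =coming over each $[t_{3i+1},t_{3i+2})$ where $d_{min}\le t_{3i+2}-t_{3i+1}\le d_{max}$, =incrossing over each $[t_{3i+2},t_{3i+3})$, and, if the sequence is finite with last element $t_k$, then $3\mid k$ and TrackStatus$(x)$=empty over $[t_k,\infty)$; (Controller Timing) Controller is immediate; (Gate Timing) Gate is bounded, there is no interval $(t,t+d_{close})$ over which Dir=close and GateStatus=opened both hold, and no interval $(t,t+d_{open})$ over which Dir=open and GateStatus=closed both hold. *)

(* Defs.v *)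
From Stdlib Require Import Reals Lra List.
Open Scope R_scope.

Inductive TStatus := empty | coming | incrossing.
Inductive DirV := DOpen | DClose.
Inductive GStatus := opened | closed.

Inductive ExtR := Fin (r : R) | Inf.
Definition ext_lt (a b : ExtR) : Prop :=
  match a, b with
  | Fin x, Fin y => x < y
  | Fin _, Inf => True
  | Inf, _ => False
  end.

Definition finite_universe (T : Type) : Prop := exists l : list T, forall x, In x l.

(* CT-free reduct of a state: internal/external dynamic functions
   (all static symbols are fixed parameters) *)
Record State (T : Type) := mkState {
  TrackStatus : T -> TStatus;
  Deadline : T -> ExtR;
  Dir : DirV;
  GateStatus : GStatus }.
Arguments mkState {T}.
Arguments TrackStatus {T}.
Arguments Deadline {T}.
Arguments Dir {T}.
Arguments GateStatus {T}.

Inductive Agent := Gate | Controller.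

Section RR.
Context {T : Type} (dclose dopen dmin dmax : R).

Definition W : R := dmin - dclose.
Definition Delta_close : R := dclose + (dmax - dmin).

(* s(x) and SafeToOpen at a state with CT = t *)
Definition s_cond (t : R) (st : State T) (x : T) : Prop :=
  TrackStatus st x = empty \/ ext_lt (Fin (t + dopen)) (Deadline st x).
Definition SafeToOpen (t : R) (st : State T) : Prop := forall x, s_cond t st x.

Inductive Update := UDeadline (x : T) (v : ExtR) | UDir (d : DirV) | UGate (g : GStatus).
Definition UpdSet := Update -> Prop.

Definition gate_updates (st : State T) : UpdSet := fun u =>
  (Dir st = DOpen /\ u = UGate opened)
  \/ (Dir st = DClose /\ u = UGate closed).

Definition ctrl_updates (t : R) (st : State T) : UpdSet := fun u =>
  (exists x, TrackStatus st x = coming /\ Deadline st x = Inf /\ u = UDeadline x (Fin (t + W)))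
  \/ (exists x, Deadline st x = Fin t /\ u = UDir DClose)
  \/ (exists x, TrackStatus st x = empty /\ ext_lt (Deadline st x) Inf /\ u = UDeadline x Inf)
  \/ (Dir st = DClose /\ SafeToOpen t st /\ u = UDir DOpen).

Definition updates_of (a : Agent) (t : R) (st : State T) : UpdSet :=
  match a with Gate => gate_updates st | Controller => ctrl_updates t st end.

Definition consistent (U : UpdSet) : Prop :=
  (forall x v v', U (UDeadline x v) -> U (UDeadline x v') -> v = v')
  /\ (forall d d', U (UDir d) -> U (UDir d') -> d = d')
  /\ (forall g g', U (UGate g) -> U (UGate g') -> g = g').

Definition result (U : UpdSet) (st st' : State T) : Prop :=
  (consistent U ->
     TrackStatus st' = TrackStatus st
     /\ (forall x, (forall v, U (UDeadline x v) -> Deadline st' x = v)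
                   /\ ((forall v, ~ U (UDeadline x v)) -> Deadline st' x = Deadline st x))
     /\ (forall d, U (UDir d) -> Dir st' = d)
     /\ ((forall d, ~ U (UDir d)) -> Dir st' = Dir st)
     /\ (forall g, U (UGate g) -> GateStatus st' = g)
     /\ ((forall g, ~ U (UGate g)) -> GateStatus st' = GateStatus st))
  /\ (~ consistent U -> st' = st).

Definition changes (U : UpdSet) (st : State T) : Prop :=
  exists u, U u /\
    match u with
    | UDeadline x v => Deadline st x <> v
    | UDir d => Dir st <> d
    | UGate g => GateStatus st <> g
    end.

Definition enabled (a : Agent) (t : R) (st : State T) : Prop :=
  consistent (updates_of a t st) /\ changes (updates_of a t st) st.

Definition combined (F : Agent -> Prop) (t : R) (st : State T) : UpdSet :=
  fun u => exists a, F a /\ updates_of a t st u.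

(* rho t is the CT-free reduct of R(t) (CT = t); fires t a : agent a fires at t *)
Definition right_lim (rho : R -> State T) (t : R) (st : State T) : Prop :=
  exists eps, 0 < eps /\ forall u, t < u < t + eps -> rho u = st.
Definition left_lim (rho : R -> State T) (t : R) (st : State T) : Prop :=
  exists eps, 0 < eps /\ forall u, t - eps < u < t -> rho u = st.

Definition pre_run (rho : R -> State T) : Prop :=
  forall tau, 0 < tau ->
    exists (n : nat) (ts : nat -> R),
      ts 0%nat = 0 /\ ts n = tau
      /\ (forall i, (i < n)%nat -> ts i < ts (S i))
      /\ (forall i, (i < n)%nat -> forall u v,
            ts i < u < ts (S i) -> ts i < v < ts (S i) -> rho u = rho v).

Definition is_run (rho : R -> State T) (fires : R -> Agent -> Prop) : Prop :=
  pre_run rho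
  /\ (forall t, 0 <= t -> forall st, right_lim rho t st ->
        (st <> rho t ->
           result (combined (fires t) t (rho t)) (rho t) st
           /\ TrackStatus st = TrackStatus (rho t))
        /\ (st = rho t -> forall a, ~ fires t a))
  /\ (forall t, 0 < t -> forall st, left_lim rho t st -> rho t <> st ->
        Deadline (rho t) = Deadline st /\ Dir (rho t) = Dir st
        /\ GateStatus (rho t) = GateStatus st).

Definition immediate (rho : R -> State T) (fires : R -> Agent -> Prop) (a : Agent) : Prop :=
  forall t, 0 <= t -> enabled a t (rho t) -> fires t a.

Definition bounded (rho : R -> State T) (fires : R -> Agent -> Prop) (a : Agent) : Prop :=
  immediate rho fires a
  \/ exists b, 0 < b /\
       ~ (exists t, 0 <= t
            /\ (forall u, t < u < t + b -> enabled a u (rho u))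
            /\ (forall u, t < u < t + b -> ~ fires u a)).

Definition initial (st : State T) : Prop :=
  forall x, TrackStatus st x = empty /\ Deadline st x = Inf.

(* significant moments: ts 0, ts 1, ...; len = None (infinite) or Some k (last index k) *)
Definition train_motion (rho : R -> State T) (x : T) : Prop :=
  exists (ts : nat -> R) (len : option nat),
    let inr := fun i : nat => match len with None => True | Some k => (i <= k)%nat end in
    ts 0%nat = 0
    /\ (forall i, inr (S i) -> ts i < ts (S i))
    /\ (forall i, inr (3 * i + 1)%nat ->
          forall t, ts (3 * i)%nat <= t < ts (3 * i + 1)%nat -> TrackStatus (rho t) x = empty)
    /\ (forall i, inr (3 * i + 2)%nat ->
          (forall t, ts (3 * i + 1)%nat <= t < ts (3 * i + 2)%nat -> TrackStatus (rho t) x = coming)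
          /\ dmin <= ts (3 * i + 2)%nat - ts (3 * i + 1)%nat <= dmax)
    /\ (forall i, inr (3 * i + 3)%nat ->
          forall t, ts (3 * i + 2)%nat <= t < ts (3 * i + 3)%nat -> TrackStatus (rho t) x = incrossing)
    /\ (forall k, len = Some k ->
          (exists m, k = (3 * m)%nat) /\ forall t, ts k <= t -> TrackStatus (rho t) x = empty).

Definition regular_run (rho : R -> State T) (fires : R -> Agent -> Prop) : Prop :=
  is_run rho fires
  /\ initial (rho 0)
  /\ (forall x, train_motion rho x)
  /\ immediate rho fires Controller
  /\ bounded rho fires Gate
  /\ ~ (exists t, 0 <= t /\ forall u, t < u < t + dclose ->
          Dir (rho u) = DClose /\ GateStatus (rho u) = opened)
  /\ ~ (exists t, 0 <= t /\ forall u, t < u < t + dopen ->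
          Dir (rho u) = DOpen /\ GateStatus (rho u) = closed).

End RR.

(* Main.v *)
Require Import Defs.
From Stdlib Require Import Reals Lra Lia List Classical FunctionalExtensionality.
Open Scope R_scope.

Lemma cont_ind (Q : R -> Prop) (a b : R) :
  a <= b -> Q a ->
  (forall t, a <= t < b -> Q t -> exists e, 0 < e /\ forall u, t < u < t + e -> Q u) ->
  (forall t, a < t <= b -> (forall u, a <= u < t -> Q u) -> Q t) ->
  forall t, a <= t <= b -> Q t.
Proof.
  intros Hab Qa Hr Hl.
  set (S := fun t => a <= t <= b /\ forall u, a <= u <= t -> Q u).
  assert (HB : bound S) by (exists b; intros x [Hx _]; lra).
  assert (HE : exists x, S x).
  { exists a; split; [lra|]. intros u Hu. replace u with a by lra. exact Qa. }
  destruct (completeness S HB HE) as [s [Hub Hlub]].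
  assert (Has : a <= s).
  { apply Hub. split; [lra|]. intros u Hu. replace u with a by lra. exact Qa. }
  assert (Hsb : s <= b) by (apply Hlub; intros x [Hx _]; lra).
  assert (Hbelow : forall u, a <= u < s -> Q u).
  { intros u Hu. apply NNPP; intro HQ.
    assert (is_upper_bound S u).
    { intros x [Hx Hx2]. destruct (Rle_or_lt x u) as [|Hxu]; [lra|].
      exfalso; apply HQ; apply Hx2; lra. }
    specialize (Hlub u H); lra. }
  assert (Qs : Q s).
  { destruct (Req_dec s a) as [->|Hne]; [exact Qa|]. apply Hl; [lra|exact Hbelow]. }
  assert (Hsb' : s = b).
  { destruct (Req_dec s b) as [|Hne]; [assumption|exfalso].
    destruct (Hr s) as [e [He HQ]]; [lra|exact Qs|].
    set (s' := s + Rmin e (b - s) / 2).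
    assert (Hmin1 : Rmin e (b - s) <= e) by apply Rmin_l.
    assert (Hmin2 : Rmin e (b - s) <= b - s) by apply Rmin_r.
    assert (Hmin3 : 0 < Rmin e (b - s)) by (apply Rmin_glb_lt; lra).
    assert (S s').
    { split; [unfold s'; lra|]. intros u Hu.
      destruct (Rlt_or_le u s). apply Hbelow; lra.
      destruct (Req_dec u s) as [->|]; [exact Qs|]. apply HQ; unfold s' in Hu; lra. }
    specialize (Hub s' H). unfold s' in Hub; lra. }
  intros t Ht. destruct (Req_dec t s) as [->|]; [exact Qs|]. apply Hbelow; lra.
Qed.

Lemma avoid (l : list R) : forall a b, a < b -> exists u, a < u < b /\ ~ In u l.
Proof.
  induction l as [|r l IH]; intros a b Hab.
  - exists ((a+b)/2); split; [lra|intros []].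
  - destruct (Rle_or_lt r ((a+b)/2)).
    + destruct (IH ((a+b)/2) b) as [u [Hu Hn]]; [lra|].
      exists u; split; [lra|]. intros [->|Hi]; [lra|auto].
    + destruct (IH a ((a+b)/2)) as [u [Hu Hn]]; [lra|].
      exists u; split; [lra|]. intros [->|Hi]; [lra|auto].
Qed.

Lemma search_r (ts : nat -> R) (x : R) : ts 0%nat <= x ->
  forall m, x < ts m -> exists i, (i < m)%nat /\ ts i <= x < ts (S i).
Proof.
  intros H0; induction m as [|m IH]; intros Hm; [lra|].
  destruct (Rlt_or_le x (ts m)) as [Hx|Hx].
  - destruct (IH Hx) as [i [Hi Hi2]]; exists i; split; [lia|exact Hi2].
  - exists m; split; [lia|lra].
Qed.

Lemma search_l (ts : nat -> R) (x : R) : ts 0%nat < x ->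
  forall m, x <= ts m -> exists i, (i < m)%nat /\ ts i < x <= ts (S i).
Proof.
  intros H0; induction m as [|m IH]; intros Hm; [lra|].
  destruct (Rle_or_lt x (ts m)) as [Hx|Hx].
  - destruct (IH Hx) as [i [Hi Hi2]]; exists i; split; [lia|exact Hi2].
  - exists m; split; [lia|lra].
Qed.

Lemma right_exists {T} (rho : R -> State T) (t : R) :
  pre_run rho -> 0 <= t -> exists st eps, 0 < eps /\ forall u, t < u < t + eps -> rho u = st.
Proof.
  intros Hp Ht. destruct (Hp (t+1)) as (n & ts & H0 & Hn & Hinc & Hc); [lra|].
  destruct (search_r ts t ltac:(lra) n ltac:(lra)) as [i [Hi Hi2]].
  exists (rho ((t + ts (S i))/2)), (ts (S i) - t); split; [lra|].
  intros u Hu. apply (Hc i Hi); lra.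
Qed.

Lemma left_exists {T} (rho : R -> State T) (t : R) :
  pre_run rho -> 0 < t -> exists st eps, 0 < eps /\ forall u, t - eps < u < t -> rho u = st.
Proof.
  intros Hp Ht. destruct (Hp (t+1)) as (n & ts & H0 & Hn & Hinc & Hc); [lra|].
  destruct (search_l ts t ltac:(lra) n ltac:(lra)) as [i [Hi Hi2]].
  exists (rho ((t + ts i)/2)), (t - ts i); split; [lra|].
  intros u Hu. apply (Hc i Hi); lra.
Qed.

Definition inrf (len : option nat) (i : nat) : Prop :=
  match len with None => True | Some k => (i <= k)%nat end.

Definition Motion {T} (dmin dmax : R) (rho : R -> State T) (x : T) (ts : nat -> R) (len : option nat) : Prop :=
    ts 0%nat = 0
    /\ (forall i, inrf len (S i) -> ts i < ts (S i))
    /\ (forall i, inrf len (3 * i + 1)%nat ->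
          forall t, ts (3 * i)%nat <= t < ts (3 * i + 1)%nat -> TrackStatus (rho t) x = empty)
    /\ (forall i, inrf len (3 * i + 2)%nat ->
          (forall t, ts (3 * i + 1)%nat <= t < ts (3 * i + 2)%nat -> TrackStatus (rho t) x = coming)
          /\ dmin <= ts (3 * i + 2)%nat - ts (3 * i + 1)%nat <= dmax)
    /\ (forall i, inrf len (3 * i + 3)%nat ->
          forall t, ts (3 * i + 2)%nat <= t < ts (3 * i + 3)%nat -> TrackStatus (rho t) x = incrossing)
    /\ (forall k, len = Some k ->
          (exists m, k = (3 * m)%nat) /\ forall t, ts k <= t -> TrackStatus (rho t) x = empty).

Lemma motion_of {T} dmin dmax (rho : R -> State T) x :
  train_motion dmin dmax rho x -> exists ts len, Motion dmin dmax rho x ts len.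
Proof. intros (ts & len & H). exists ts, len. exact H. Qed.

Lemma inr_down len m n : (n <= m)%nat -> inrf len m -> inrf len n.
Proof. destruct len; simpl; lia. Qed.

Section M.
Context {T : Type} (dmin dmax : R) (rho : R -> State T) (x : T) (ts : nat -> R) (len : option nat)
  (HM : Motion dmin dmax rho x ts len) (Hdmin : 0 < dmin).

Lemma mono : forall m n, (n < m)%nat -> inrf len m -> ts n < ts m.
Proof.
  destruct HM as (H0 & H1 & _).
  induction m as [|m IH]; intros n Hn Hi; [lia|].
  assert (ts m < ts (S m)) by (apply H1; exact Hi).
  destruct (Nat.eq_dec n m) as [->|]; [exact H|].
  assert (ts n < ts m) by (apply IH; [lia| apply (inr_down len (S m)); [lia|exact Hi]]).
  lra.
Qed.

Lemma inr_3 j r : (r <= 2)%nat -> inrf len (3 * j + 1 + r)%nat -> inrf len (3 * j + 3)%nat.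
Proof.
  destruct HM as (_ & _ & _ & _ & _ & H5).
  destruct len as [k|]; simpl; [|auto]. intros Hr Hk.
  destruct (H5 k eq_refl) as [[m ->] _]. lia.
Qed.

Lemma ts_pos i : inrf len i -> 0 <= ts i.
Proof.
  destruct i. destruct HM as [H0 _]; lra.
  intro Hi. pose proof (mono (S i) 0 ltac:(lia) Hi). destruct HM as [H0 _]; lra.
Qed.

Lemma after_end j : inrf len (3 * j + 3)%nat ->
  exists e, 0 < e /\ forall u, ts (3*j+3)%nat <= u < ts (3*j+3)%nat + e -> TrackStatus (rho u) x = empty.
Proof.
  destruct HM as (H0 & H1 & H2 & H3 & H4 & H5). intros Hi.
  destruct (classic (inrf len (3*j+4)%nat)) as [Hi4|Hi4].
  - exists (ts (3*j+4)%nat - ts (3*j+3)%nat). split.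
    + pose proof (H1 (3*j+3)%nat). replace (S (3*j+3)) with (3*j+4)%nat in H by lia. specialize (H Hi4); lra.
    + intros u Hu. specialize (H2 (S j)). replace (3 * S j)%nat with (3*j+3)%nat in H2 by lia.
      replace (3*j+3+1)%nat with (3*j+4)%nat in H2 by lia. apply H2; [exact Hi4|lra].
  - destruct len as [k|]; simpl in Hi, Hi4; [|exfalso; auto].
    assert (k = (3*j+3)%nat) by lia. subst k.
    exists 1; split; [lra|]. intros u Hu. apply (proj2 (H5 _ eq_refl)); lra.
Qed.

Lemma ts_unbounded : len = None -> forall m, INR m * dmin <= ts (3 * m)%nat.
Proof.
  destruct HM as (H0 & H1 & H2 & H3 & H4 & H5). intros Hl; subst len.
  induction m as [|m IH].
  - simpl. rewrite H0; lra.
  - rewrite S_INR. replace (3 * S m)%nat with (S (3*m+2))%nat by lia.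
    pose proof (H1 (3*m+2)%nat I) as A1. pose proof (proj2 (H3 m I)) as A2.
    pose proof (H1 (3*m)%nat I) as A3. replace (S (3*m)) with (3*m+1)%nat in A3 by lia. lra.
Qed.

Lemma classify t : 0 <= t ->
  (exists i, inrf len (S i) /\ ts i <= t < ts (S i)) \/ (exists k, len = Some k /\ ts k <= t).
Proof.
  intro Ht. pose proof HM as (H0 & _). pose proof ts_unbounded as TU.
  destruct len as [k|] eqn:El.
  - destruct (Rlt_or_le t (ts k)).
    + left. destruct (search_r ts t ltac:(lra) k H) as [i [Hi Hi2]]. exists i; simpl; split; [lia|exact Hi2].
    + right; exists k; auto.
  - left. destruct (archimed (t / dmin)) as [Hup _].
    set (z := up (t / dmin)) in *.
    assert (Hz : (0 < z)%Z). { apply lt_0_IZR. assert (0 <= t/dmin) by (unfold Rdiv; apply Rmult_le_pos; [lra|left; apply Rinv_0_lt_compat; lra]). lra. }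
    set (m := Z.to_nat z).
    assert (HINR : INR m = IZR z) by (unfold m; rewrite INR_IZR_INZ, Znat.Z2Nat.id; [reflexivity|lia]).
    pose proof (TU eq_refl m).
    assert (t < INR m * dmin).
    { rewrite HINR. apply (Rmult_lt_compat_r dmin) in Hup; [|lra].
      unfold Rdiv in Hup. rewrite Rmult_assoc, Rinv_l in Hup; lra. }
    destruct (search_r ts t ltac:(lra) (3*m)%nat ltac:(lra)) as [i [Hi Hi2]]. exists i. simpl. split; [exact I|exact Hi2].
Qed.

Lemma mod3 i : exists j, i = (3*j)%nat \/ i = (3*j+1)%nat \/ i = (3*j+2)%nat.
Proof.
  induction i as [|i [j [->|[->| ->]]]].
  - exists 0%nat; lia.
  - exists j; lia.
  - exists j; lia.
  - exists (S j); lia.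
Qed.

Lemma coming_phase t : 0 <= t -> TrackStatus (rho t) x = coming ->
  exists j, inrf len (3*j+2)%nat /\ ts (3*j+1)%nat <= t < ts (3*j+2)%nat.
Proof.
  pose proof HM as (H0 & H1 & H2 & H3 & H4 & H5). intros Ht Hc.
  destruct (classify t Ht) as [[i [Hi Hti]]|[k [Hk Htk]]].
  - destruct (mod3 i) as [j [->|[->| ->]]].
    + replace (S (3*j)) with (3*j+1)%nat in *  by lia. rewrite (H2 j Hi t Hti) in Hc; discriminate.
    + exists j. replace (S (3*j+1)) with (3*j+2)%nat in * by lia. auto.
    + replace (S (3*j+2)) with (3*j+3)%nat in * by lia. rewrite (H4 j Hi t Hti) in Hc; discriminate.
  - rewrite (proj2 (H5 k Hk) t Htk) in Hc; discriminate.
Qed.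

Lemma incrossing_at j : inrf len (3*j+3)%nat -> TrackStatus (rho (ts (3*j+2)%nat)) x = incrossing.
Proof.
  pose proof HM as (H0 & H1 & H2 & H3 & H4 & H5). intros Hi.
  apply (H4 j Hi). split; [lra|]. pose proof (H1 (3*j+2)%nat). replace (S (3*j+2)) with (3*j+3)%nat in H by lia. auto.
Qed.

Lemma ts_inj n m : inrf len n -> inrf len m -> ts n = ts m -> n = m.
Proof.
  intros Hn Hm E. destruct (Nat.lt_total n m) as [H|[H|H]]; auto.
  - pose proof (mono m n H Hm); lra.
  - pose proof (mono n m H Hn); lra.
Qed.

Lemma inr32 j : inrf len (3*j+2)%nat -> inrf len (3*j+3)%nat.
Proof.
  intro Hi. apply (inr_3 j 1%nat); [lia|]. replace (3*j+1+1)%nat with (3*j+2)%nat by lia; exact Hi.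
Qed.

End M.

Theorem mainTheorem10 (T : Type) (HT : finite_universe T)
  (dclose dopen dmin dmax : R)
  (Hc : 0 < dclose) (Ho : 0 < dopen) (Hmin : 0 < dmin) (Hmax : 0 < dmax)
  (Hcmin : dclose < dmin) (Hminmax : dmin <= dmax)
  (rho : R -> State T) (fires : R -> Agent -> Prop)
  (Hreg : regular_run dclose dopen dmin dmax rho fires)
  (alpha beta : R) (Ha : 0 <= alpha) (Hab : alpha < beta)
  (Hgap : alpha + dopen < beta - Delta_close dclose dmin dmax)
  (Hnoc : forall x t, alpha < t < beta -> TrackStatus (rho t) x <> incrossing) :
  forall t, alpha + dopen <= t <= beta - Delta_close dclose dmin dmax ->
    GateStatus (rho t) = opened.
Proof.
  destruct Hreg as (Hrun & Hinit & Hmot & Himm & Hgb & Hgc & Hgo).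
  destruct Hrun as (Hpre & Hright & Hleft).
  set (Wv := W dclose dmin) in *.
  set (Dl := Delta_close dclose dmin dmax) in *.
  assert (HW : Wv = dmin - dclose) by reflexivity.
  assert (HDl : Dl = dclose + (dmax - dmin)) by reflexivity.
  set (U := fun t => combined dclose dopen dmin (fires t) t (rho t)).
  assert (Fres : forall t st eps, 0 <= t -> 0 < eps -> (forall u, t < u < t + eps -> rho u = st) ->
     st = rho t \/ (consistent (U t) /\
       (forall y, (forall v, U t (UDeadline y v) -> Deadline st y = v)
                   /\ ((forall v, ~ U t (UDeadline y v)) -> Deadline st y = Deadline (rho t) y))
     /\ (forall d, U t (UDir d) -> Dir st = d)
     /\ ((forall d, ~ U t (UDir d)) -> Dir st = Dir (rho t))
     /\ (forall g, U t (UGate g) -> GateStatus st = g)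
     /\ ((forall g, ~ U t (UGate g)) -> GateStatus st = GateStatus (rho t)))).
  { intros t st eps Ht He Hst.
    destruct (classic (st = rho t)) as [E|E]; [left; exact E|right].
    assert (Hrl : right_lim rho t st) by (exists eps; split; assumption).
    destruct (proj1 (Hright t Ht st Hrl) E) as [[Hr1 Hr2] _].
    destruct (classic (consistent (U t))) as [C|C]; [|exfalso; apply E; exact (Hr2 C)].
    destruct (Hr1 C) as (_ & HD & HD1 & HD2 & HG1 & HG2).
    split; [exact C|]. repeat split; auto; apply HD. }
  assert (Fdl : forall t st eps, 0 <= t -> 0 < eps -> (forall u, t < u < t + eps -> rho u = st) ->
     forall y, Deadline st y = Deadline (rho t) y
       \/ (Deadline st y = Fin (t + Wv) /\ TrackStatus (rho t) y = coming /\ Deadline (rho t) y = Inf)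
       \/ Deadline st y = Inf).
  { intros t st eps Ht He Hst y.
    destruct (Fres t st eps Ht He Hst) as [E|(C & HD & _)]; [left; rewrite E; reflexivity|].
    destruct (HD y) as [HD1 HD2].
    destruct (classic (exists v, U t (UDeadline y v))) as [[v Hv]|Hn].
    - rewrite (HD1 v Hv). destruct Hv as [a [_ Ua]]. destruct a; simpl in Ua.
      + unfold gate_updates in Ua. destruct Ua as [[_ E]|[_ E]]; discriminate.
      + unfold ctrl_updates in Ua.
        destruct Ua as [(z & Hz1 & Hz2 & E)|[(z & _ & E)|[(z & Hz1 & Hz2 & E)|(_ & _ & E)]]];
          inversion E; subst; auto.
    - left. apply HD2. intros v Hv. apply Hn. exists v; exact Hv. }
  assert (Fdir : forall t st eps, 0 <= t -> 0 < eps -> (forall u, t < u < t + eps -> rho u = st) ->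
     Dir st = Dir (rho t) \/ Dir st = DOpen \/ exists y, Deadline (rho t) y = Fin t).
  { intros t st eps Ht He Hst.
    destruct (Fres t st eps Ht He Hst) as [E|(C & _ & HD1 & HD2 & _)]; [left; rewrite E; reflexivity|].
    destruct (classic (exists d, U t (UDir d))) as [[d Hd]|Hn].
    - rewrite (HD1 d Hd). destruct Hd as [a [_ Ua]]. destruct a; simpl in Ua.
      + unfold gate_updates in Ua. destruct Ua as [[_ E]|[_ E]]; discriminate.
      + unfold ctrl_updates in Ua.
        destruct Ua as [(z & Hz1 & Hz2 & E)|[(z & Hz & E)|[(z & Hz1 & Hz2 & E)|(_ & _ & E)]]];
          inversion E; subst; eauto.
    - left. apply HD2. intros v Hv. apply Hn. exists v; exact Hv. }
  assert (Fgate : forall t st eps, 0 <= t -> 0 < eps -> (forall u, t < u < t + eps -> rho u = st) ->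
     GateStatus st = GateStatus (rho t) \/ (Dir (rho t) = DOpen /\ GateStatus st = opened)
     \/ (Dir (rho t) = DClose /\ GateStatus st = closed)).
  { intros t st eps Ht He Hst.
    destruct (Fres t st eps Ht He Hst) as [E|(C & _ & _ & _ & HD1 & HD2)]; [left; rewrite E; reflexivity|].
    destruct (classic (exists d, U t (UGate d))) as [[d Hd]|Hn].
    - rewrite (HD1 d Hd). destruct Hd as [a [_ Ua]]. destruct a; simpl in Ua.
      + unfold gate_updates in Ua. destruct Ua as [[H1 E]|[H1 E]]; inversion E; subst; auto.
      + unfold ctrl_updates in Ua.
        destruct Ua as [(z & Hz1 & Hz2 & E)|[(z & Hz & E)|[(z & Hz1 & Hz2 & E)|(_ & _ & E)]]];
          discriminate.
    - left. apply HD2. intros v Hv. apply Hn. exists v; exact Hv. }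
  assert (Fleft : forall t, 0 < t -> exists st eps, 0 < eps /\ (forall u, t - eps < u < t -> rho u = st) /\
      Deadline (rho t) = Deadline st /\ Dir (rho t) = Dir st /\ GateStatus (rho t) = GateStatus st).
  { intros t Ht. destruct (left_exists rho t Hpre Ht) as (st & eps & He & Hst).
    exists st, eps. split; [exact He|]. split; [exact Hst|].
    destruct (classic (rho t = st)) as [E|E]; [rewrite E; auto|].
    apply (Hleft t Ht st); [exists eps; split; assumption|exact E]. }
  assert (Fgood : forall t st eps, 0 <= t -> 0 < eps -> (forall u, t < u < t + eps -> rho u = st) ->
     forall a' b', t <= a' < b' -> b' <= t + eps -> exists u, a' < u < b' /\
       (forall y, TrackStatus st y = coming -> Deadline st y <> Inf) /\
       (forall y, TrackStatus st y = empty -> Deadline st y = Inf) /\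
       (Dir st = DClose -> ~ SafeToOpen dopen u st)).
  { intros t st eps Ht He Hst a' b' Ha' Hb'.
    destruct HT as [l Hl].
    set (f := fun y => match Deadline st y with Fin r => r | Inf => 0 end).
    destruct (avoid (map f l) a' b') as [u [Hu Hn]]; [lra|].
    exists u. split; [exact Hu|].
    assert (Hgood : forall y, Deadline st y <> Fin u).
    { intros y E. apply Hn. replace u with (f y) by (unfold f; rewrite E; reflexivity).
      apply in_map; auto. }
    assert (Hne : ~ enabled dclose dopen dmin Controller u st).
    { intro En. assert (Fi : fires u Controller).
      { apply Himm; [lra|]. rewrite (Hst u); [exact En|lra]. }
      assert (Hrl : right_lim rho u st).
      { exists (t + eps - u). split; [lra|]. intros v Hv. apply Hst; lra. }
      apply (proj2 (Hright u ltac:(lra) st Hrl) (eq_sym (Hst u ltac:(lra))) Controller Fi). }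
    assert (Hcons : consistent (ctrl_updates dclose dopen dmin u st)).
    { unfold consistent, ctrl_updates. split; [|split].
      - intros y v v' H1 H2.
        destruct H1 as [(z&A1&A2&E)|[(z&A1&E)|[(z&A1&A2&E)|(A1&A2&E)]]]; try discriminate;
        destruct H2 as [(z'&B1&B2&E')|[(z'&B1&E')|[(z'&B1&B2&E')|(B1&B2&E')]]]; try discriminate;
        inversion E; inversion E'; subst; congruence.
      - intros d d' H1 H2.
        destruct H1 as [(z&A1&A2&E)|[(z&A1&E)|[(z&A1&A2&E)|(A1&A2&E)]]]; try discriminate;
        [exfalso; exact (Hgood z A1)|];
        destruct H2 as [(z'&B1&B2&E')|[(z'&B1&E')|[(z'&B1&B2&E')|(B1&B2&E')]]]; try discriminate;
        [exfalso; exact (Hgood z' B1)|];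
        inversion E; inversion E'; subst; congruence.
      - intros g g' H1 H2.
        destruct H1 as [(z&A1&A2&E)|[(z&A1&E)|[(z&A1&A2&E)|(A1&A2&E)]]]; discriminate. }
    split; [|split].
    - intros y Hy E. apply Hne. split; [exact Hcons|].
      exists (UDeadline y (Fin (u + Wv))). split.
      + simpl. left. exists y. auto.
      + rewrite E; discriminate.
    - intros y Hy. destruct (Deadline st y) as [r|] eqn:E; [exfalso|reflexivity].
      apply Hne. split; [exact Hcons|].
      exists (UDeadline y Inf). split.
      + simpl. right; right; left. exists y. rewrite E. simpl. auto.
      + rewrite E; discriminate.
    - intros Hd Hs. apply Hne. split; [exact Hcons|].
      exists (UDir DOpen). split.
      + simpl. right; right; right. auto.
      + rewrite Hd; discriminate. }
  assert (Finv : forall x ts len, Motion dmin dmax rho x ts len -> forall t, 0 <= t ->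
     (Deadline (rho t) x = Inf -> forall j, inrf len (3*j+2)%nat -> ~ (ts (3*j+1)%nat < t <= ts (3*j+2)%nat)) /\
     (forall d, Deadline (rho t) x = Fin d -> exists j, inrf len (3*j+3)%nat /\
        ts (3*j+1)%nat < t <= ts (3*j+3)%nat /\ d = ts (3*j+1)%nat + Wv)).
  { intros x ts len HM. pose proof HM as (H0 & H1 & H2 & H3 & H4 & H5).
    pose proof (mono _ _ _ _ _ _ HM) as Mono.
    intros t Ht.
    apply (cont_ind (fun t => (Deadline (rho t) x = Inf -> forall j, inrf len (3*j+2)%nat -> ~ (ts (3*j+1)%nat < t <= ts (3*j+2)%nat)) /\
     (forall d, Deadline (rho t) x = Fin d -> exists j, inrf len (3*j+3)%nat /\
        ts (3*j+1)%nat < t <= ts (3*j+3)%nat /\ d = ts (3*j+1)%nat + Wv)) 0 t); [lra| | | |lra].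
    - destruct (Hinit x) as [_ Hd]. split.
      + intros _ j Hi [h1 h2]. pose proof (Mono (3*j+1)%nat 0%nat ltac:(lia) (inr_down len (3*j+2)%nat (3*j+1)%nat ltac:(lia) Hi)). lra.
      + intros d E. rewrite Hd in E; discriminate.
    - intros s [Hs0 _] [QA QB].
      destruct (right_exists rho s Hpre Hs0) as (st & eps & He & Hst).
      destruct (Deadline st x) as [d|] eqn:Ed.
      + destruct (Fdl s st eps Hs0 He Hst x) as [E|[(E1&Ecom&Einf)|E]].
        * rewrite Ed in E. destruct (QB d (eq_sym E)) as (j & Hi3 & [h1 h2] & Hd).
          destruct (Rlt_or_le s (ts (3*j+3)%nat)) as [Hlt|Hle].
          -- exists (Rmin eps (ts (3*j+3)%nat - s)). split; [apply Rmin_glb_lt; lra|].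
             intros u Hu. pose proof (Rmin_l eps (ts (3*j+3)%nat - s)). pose proof (Rmin_r eps (ts (3*j+3)%nat - s)).
             rewrite (Hst u ltac:(lra)). split.
             ++ intro E'; rewrite Ed in E'; discriminate.
             ++ intros d0 E'. rewrite Ed in E'. inversion E'; subst. exists j. split; [exact Hi3|]. split; [lra|reflexivity].
          -- exfalso. destruct (after_end _ _ _ _ _ _ HM j Hi3) as (e & He' & Hemp).
             destruct (Fgood s st eps Hs0 He Hst s (s + Rmin eps e)) as (u & Hu & _ & Gc & _).
             { split; [lra|]. assert (0 < Rmin eps e) by (apply Rmin_glb_lt; lra). lra. }
             { pose proof (Rmin_l eps e). lra. }
             pose proof (Rmin_l eps e). pose proof (Rmin_r eps e).
             assert (Hem : TrackStatus st x = empty).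
             { rewrite <- (Hst u ltac:(lra)). apply Hemp. lra. }
             rewrite (Gc x Hem) in Ed; discriminate.
        * rewrite Ed in E1. inversion E1; subst d.
          destruct (coming_phase _ _ _ _ _ _ HM Hmin s Hs0 Ecom) as (j & Hi & h1 & h2).
          pose proof (QA Einf j Hi) as QAj.
          assert (Es : s = ts (3*j+1)%nat) by (destruct (Req_dec s (ts (3*j+1)%nat)); [auto|exfalso; apply QAj; lra]).
          pose proof (inr32 _ _ _ _ _ _ HM j Hi) as Hi3.
          pose proof (H1 (3*j+2)%nat) as H12. replace (S (3*j+2)) with (3*j+3)%nat in H12 by lia.
          specialize (H12 Hi3).
          exists (Rmin eps (ts (3*j+3)%nat - s)). split; [apply Rmin_glb_lt; lra|].
          intros u Hu. pose proof (Rmin_l eps (ts (3*j+3)%nat - s)). pose proof (Rmin_r eps (ts (3*j+3)%nat - s)).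
          rewrite (Hst u ltac:(lra)). split.
          -- intro E'; rewrite Ed in E'; discriminate.
          -- intros d0 E'. rewrite Ed in E'. inversion E'; subst. exists j. split; [exact Hi3|]. split; [lra|reflexivity].
        * rewrite Ed in E; discriminate.
      + destruct (Fgood s st eps Hs0 He Hst s (s + eps)) as (u0 & Hu0 & Ga & _); [lra|lra|].
        assert (Hnc : TrackStatus st x <> coming) by (intro Hcm; exact (Ga x Hcm Ed)).
        exists eps. split; [exact He|]. intros u Hu. rewrite (Hst u Hu). split.
        * intros _ j Hi [h1 h2].
          set (v := (Rmax s (ts (3*j+1)%nat) + u) / 2).
          pose proof (Rmax_l s (ts (3*j+1)%nat)). pose proof (Rmax_r s (ts (3*j+1)%nat)).
          assert (Hmx : Rmax s (ts (3*j+1)%nat) < u) by (apply Rmax_lub_lt; lra).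
          apply Hnc. rewrite <- (Hst v ltac:(unfold v; lra)).
          apply (proj1 (H3 j Hi)). unfold v; lra.
        * intros d E; rewrite Ed in E; discriminate.
    - intros s [Hs0 Hsb] Hbelow.
      destruct (Fleft s Hs0) as (st & eps & He & Hst & Ed & _).
      assert (Edx : Deadline (rho s) x = Deadline st x) by (rewrite Ed; reflexivity).
      set (e' := Rmin eps s).
      assert (He'1 : e' <= eps) by apply Rmin_l. assert (He'2 : e' <= s) by apply Rmin_r.
      assert (He'0 : 0 < e') by (apply Rmin_glb_lt; lra).
      assert (Hv : forall v, s - e' < v < s -> Deadline (rho v) x = Deadline st x /\ 
         ((Deadline (rho v) x = Inf -> forall j, inrf len (3*j+2)%nat -> ~ (ts (3*j+1)%nat < v <= ts (3*j+2)%nat)) /\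
         (forall d, Deadline (rho v) x = Fin d -> exists j, inrf len (3*j+3)%nat /\
           ts (3*j+1)%nat < v <= ts (3*j+3)%nat /\ d = ts (3*j+1)%nat + Wv))).
      { intros v Hv. split; [rewrite (Hst v ltac:(lra)); reflexivity|]. apply Hbelow; lra. }
      split.
      + intros Einf j Hi [h1 h2].
        set (v := (Rmax (s - e') (ts (3*j+1)%nat) + s) / 2).
        pose proof (Rmax_l (s - e') (ts (3*j+1)%nat)). pose proof (Rmax_r (s - e') (ts (3*j+1)%nat)).
        assert (Hmx : Rmax (s - e') (ts (3*j+1)%nat) < s) by (apply Rmax_lub_lt; lra).
        destruct (Hv v ltac:(unfold v; lra)) as [Ev [QA _]].
        apply (QA ltac:(rewrite Ev, <- Edx; exact Einf) j Hi). unfold v; lra.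
      + intros d Ef.
        destruct (Hv (s - e'/2) ltac:(lra)) as [Ev [_ QB]].
        destruct (QB d ltac:(rewrite Ev, <- Edx; exact Ef)) as (j & Hi3 & [h1 h2] & Hd).
        exists j. split; [exact Hi3|]. split; [|exact Hd]. split; [lra|].
        destruct (Rle_or_lt s (ts (3*j+3)%nat)) as [|Hlt]; [assumption|exfalso].
        set (v := (Rmax (s - e'/2) (ts (3*j+3)%nat) + s) / 2).
        pose proof (Rmax_l (s - e'/2) (ts (3*j+3)%nat)). pose proof (Rmax_r (s - e'/2) (ts (3*j+3)%nat)).
        assert (Hmx : Rmax (s - e'/2) (ts (3*j+3)%nat) < s) by (apply Rmax_lub_lt; lra).
        destruct (Hv v ltac:(unfold v; lra)) as [Ev' [_ QB']].
        destruct (QB' d ltac:(rewrite Ev', <- Edx; exact Ef)) as (j' & Hi3' & [h1' h2'] & Hd').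
        assert (Ej : (3*j'+1)%nat = (3*j+1)%nat).
        { apply (ts_inj _ _ _ _ _ _ HM).
          - apply (inr_down len (3*j'+3)); [lia|exact Hi3'].
          - apply (inr_down len (3*j+3)); [lia|exact Hi3].
          - lra. }
        assert (j' = j) by lia. subst j'. unfold v in h2'. lra. }
  set (b := beta - Dl) in *.
  assert (HDlpos : 0 < Dl) by lra.
  assert (Fbound : forall x d u, alpha < u < beta -> Deadline (rho u) x = Fin d -> b <= d).
  { intros x d u Hu Ed.
    destruct (motion_of _ _ _ _ (Hmot x)) as (ts & len & HM).
    destruct (proj2 (Finv x ts len HM u ltac:(lra)) d Ed) as (j & Hi3 & [h1 h2] & Hd).
    pose proof HM as (H0 & H1 & H2 & H3 & H4 & H5).
    destruct (H3 j (inr_down len (3*j+3) (3*j+2) ltac:(lia) Hi3)) as [_ Hr].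
    destruct (Rle_or_lt beta (ts (3*j+2)%nat)) as [Hge|Hlt]; [unfold b; lra|exfalso].
    destruct (Rlt_or_le alpha (ts (3*j+2)%nat)) as [Hgt|Hle].
    - apply (Hnoc x (ts (3*j+2)%nat)); [lra|]. apply (incrossing_at _ _ _ _ _ _ HM j Hi3).
    - apply (Hnoc x ((alpha + u)/2)); [lra|]. apply (H4 j Hi3). lra. }
  assert (Fnoclose : forall t y, alpha < t < b -> Deadline (rho t) y <> Fin t).
  { intros t y Ht Ed.
    destruct (motion_of _ _ _ _ (Hmot y)) as (ts & len & HM).
    destruct (proj2 (Finv y ts len HM t ltac:(lra)) t Ed) as (j & Hi3 & [h1 h2] & Hd).
    pose proof HM as (H0 & H1 & H2 & H3 & H4 & H5).
    destruct (H3 j (inr_down len (3*j+3) (3*j+2) ltac:(lia) Hi3)) as [_ Hr].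
    apply (Hnoc y (ts (3*j+2)%nat)); [unfold b in Ht; lra|]. apply (incrossing_at _ _ _ _ _ _ HM j Hi3). }
  destruct (right_exists rho alpha Hpre Ha) as (st0 & eps0 & He0 & Hst0).
  set (e1 := Rmin eps0 (b - dopen - alpha)).
  assert (He11 : e1 <= eps0) by apply Rmin_l. assert (He12 : e1 <= b - dopen - alpha) by apply Rmin_r.
  assert (He10 : 0 < e1) by (apply Rmin_glb_lt; lra).
  assert (Dnear : forall u, alpha < u < alpha + e1 -> Dir (rho u) = DOpen).
  { destruct (Fgood alpha st0 eps0 Ha He0 Hst0 alpha (alpha + e1)) as (u & Hu & Ga & Gc & Gd); [lra|lra|].
    assert (Dir st0 = DOpen).
    { destruct (Dir st0) eqn:Ed; [reflexivity|exfalso]. apply (Gd eq_refl). intro y.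
      unfold s_cond. destruct (TrackStatus st0 y) eqn:Ey.
      - left; reflexivity.
      - right. destruct (Deadline st0 y) as [d|] eqn:Edd; [|exact I]. simpl.
        rewrite <- (Hst0 u ltac:(lra)) in Edd. pose proof (Fbound y d u ltac:(unfold b in *; lra) Edd). lra.
      - exfalso. apply (Hnoc y u); [unfold b in *; lra|]. rewrite (Hst0 u ltac:(lra)). exact Ey. }
    intros v Hv. rewrite (Hst0 v ltac:(lra)). assumption. }
  assert (Dall : forall t, alpha + e1/2 <= t <= b -> Dir (rho t) = DOpen).
  { apply cont_ind; [lra|apply Dnear; lra| |].
    - intros s [Hs1 Hs2] Qs. destruct (right_exists rho s Hpre ltac:(lra)) as (st & eps & He & Hst).
      exists eps. split; [exact He|]. intros u Hu. rewrite (Hst u Hu).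
      destruct (Fdir s st eps ltac:(lra) He Hst) as [E|[E|[y Ey]]].
      + rewrite E; exact Qs.
      + exact E.
      + exfalso. apply (Fnoclose s y); [lra|exact Ey].
    - intros s [Hs1 Hs2] Hbelow. destruct (Fleft s ltac:(lra)) as (st & eps & He & Hst & _ & Ed & _).
      set (v := s - Rmin eps (s - (alpha + e1/2)) / 2).
      assert (0 < Rmin eps (s - (alpha + e1/2))) by (apply Rmin_glb_lt; lra).
      pose proof (Rmin_l eps (s - (alpha + e1/2))). pose proof (Rmin_r eps (s - (alpha + e1/2))).
      rewrite Ed, <- (Hst v ltac:(unfold v; lra)). apply Hbelow. unfold v; lra. }
  assert (DirOpen : forall t, alpha < t <= b -> Dir (rho t) = DOpen).
  { intros t Ht. destruct (Rlt_or_le t (alpha + e1)). apply Dnear; lra. apply Dall; lra. }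
  assert (Hg0 : exists u, alpha < u < alpha + dopen /\ GateStatus (rho u) = opened).
  { apply NNPP. intro Hn. apply Hgo. exists alpha. split; [exact Ha|]. intros u Hu.
    split; [apply DirOpen; lra|].
    destruct (GateStatus (rho u)) eqn:Eg; [exfalso; apply Hn; exists u; auto|reflexivity]. }
  destruct Hg0 as (g & Hg & Hgo').
  assert (Gall : forall t, g <= t <= b -> GateStatus (rho t) = opened).
  { apply cont_ind; [lra|exact Hgo'| |].
    - intros s [Hs1 Hs2] Qs. destruct (right_exists rho s Hpre ltac:(lra)) as (st & eps & He & Hst).
      exists eps. split; [exact He|]. intros u Hu. rewrite (Hst u Hu).
      destruct (Fgate s st eps ltac:(lra) He Hst) as [E|[[_ E]|[E _]]].
      + rewrite E; exact Qs.
      + exact E.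
      + exfalso. rewrite (DirOpen s ltac:(lra)) in E. discriminate.
    - intros s [Hs1 Hs2] Hbelow. destruct (Fleft s ltac:(lra)) as (st & eps & He & Hst & _ & _ & Eg).
      set (v := s - Rmin eps (s - g) / 2).
      assert (0 < Rmin eps (s - g)) by (apply Rmin_glb_lt; lra).
      pose proof (Rmin_l eps (s - g)). pose proof (Rmin_r eps (s - g)).
      rewrite Eg, <- (Hst v ltac:(unfold v; lra)). apply Hbelow. unfold v; lra. }
  intros t Ht. apply Gall. lra.
Qed.
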